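(* At any point during the execution of the Part I procedure, let $B$ be a blossom (node of the search structure $S$) with base $b$, and let $v$ be a vertex of $B$. Then $b$ lies on the canonical path of $v$, and the subpath of the canonical path of $v$ that starts in $b$ and ends in $v$ has length $\mathrm{lcp}(v)-\mathrm{lcp}(b)$.
   Context: Let $G=(V,E)$ be a finite undirected graph with $n$ vertices and $M$ a matching in $G$. A vertex is free if no edge of $M$ is incident to it; for a matched vertex $v$, $\mathit{mate}(v)$ is its partner. An alternating path is a simple path whose edges alternate between $E\setminus M$ and $M$; an augmenting path is an alternating path connecting two distinct free vertices; a shortest augmenting path is called a sap. For a vertex $v$, $\mathrm{Lcp}(v)$ (resp. $\mathrm{Lcp}_{\mathrm{odd}}(v)$) denotes the minimum length of an even-length (resp. odd-length) alternating path in $G$ from a free vertex to $v$ ($\infty$ if none). The Part I procedure maintains a search structure $S$: a forest whose nodes are either single (odd) vertices or blossoms (disjoint vertex sets with a distinguished vertex, the base); each tree is rooted at a blossom containing a free vertex. Vertices in $S$ are labelled even (those in blossoms) or odd; vertices not in $S$ are unlabelled. A vertex is born even/odd according to the label it receives when inserted. The procedure maintains $\mathrm{lcp}(v)$ for even vertices and $\mathrm{lcp}_{\mathrm{odd}}(v)$ for vertices born odd. The blossom nodes currently in $S$ are the maximal blossoms. Phase $0$: every free vertex becomes the root of its own tree as a trivial blossom $\{v\}$ with base $v$, labelled even, $\mathrm{lcp}(v)=0$. Then for $\Delta=1,2,\dots$, phase $\Delta$ does: (i) if $\Delta$ is even, growth steps: while some even vertex $v$ with $\mathrm{lcp}(v)=\Delta-2$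 has a neighbour $x$ not in $S$ (such $x$ is matched), add $x$ as an odd child of the blossom containing $v$ with $\mathrm{lcp}_{\mathrm{odd}}(x)=\Delta-1$, and add $\mathit{mate}(x)$ as a child of $x$, as a trivial even blossom with $\mathrm{lcp}(\mathit{mate}(x))=\Delta$; (ii) bridge steps: while there is a non-matching edge $xy$ with $x,y$ even, lying in different maximal blossoms $B_x,B_y$, and $\mathrm{lcp}(x)+\mathrm{lcp}(y)=2\Delta-2$: if $B_x,B_y$ lie in different trees, the procedure stops (''an augmenting path is found in phase $\Delta$''); otherwise let $B$ be the lowest common ancestor of $B_x$ and $B_y$ in their tree (a blossom). Every odd vertex $z$ on the tree path from $B_x$ to $B$ or from $B_y$ to $B$ becomes even with $\mathrm{lcp}(z)=\mathrm{lcp}(x)+1+\mathrm{lcp}(y)-\mathrm{lcp}_{\mathrm{odd}}(z)$, and $B$ together with all blossoms and odd vertices on both tree paths is merged into one new blossom with the base of $B$ as its base, which takes the place of $B$ in the tree (children of merged nodes become its children); $xy$ is the bridge of the new blossom. Canonical paths: a free root vertex has the trivial path; in a growth step from $v$ to $x$, the canonical path of $x$ is that of $v$ followed by $vx$, and that of $\mathit{mate}(x)$ is that of $x$ followed by $x\,\mathit{mate}(x)$; in a bridge step, for an odd vertex $z$ on the path from $B_y$ to $B$ the new canonical path of $z$ is the canonical path of $x$, then the edge $xy$, then the reversal of the subpath of the canonical path of $y$ from $z$ to $y$ (symmetrically with $x,y$ exchanged for $z$ on the path from $B_x$ to $B$). *)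

(* Defs.v *)
(* Model of the Part I procedure as a nondeterministic
   transition system; the lemma is an invariant of all reachable states. *)
From mathcomp Require Import all_boot.
Set Implicit Arguments. Unset Strict Implicit. Unset Printing Implicit Defensive.

Definition is_matching (V : finType) (e : rel V) (mate : V -> option V) :=
  forall u w, mate u = Some w -> mate w = Some u /\ e u w.

(* State of the search structure S.
   - nodes: the nodes of the forest (odd nodes are singletons {x},
     blossom nodes are vertex sets); blossoms: the blossom nodes
     (= current maximal blossoms), a subset of nodes;
   - parent: parent pointer of the forest on nodes;
   - base: base of a blossom;
   - lcp / lcpo: the maintained values lcp and lcp_odd;
   - cp v: canonical path of v, as the vertex sequence from the free root
     vertex to v (its length is size - 1);
   - delta: current phase; growing: whether we are in the growth part (i)
     of the phase (true) or in the bridge part (ii) (false). *)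
Record state (V : finType) := St {
  delta : nat;
  growing : bool;
  nodes : {set {set V}};
  blossoms : {set {set V}};
  parent : {set V} -> option {set V};
  base : {set V} -> option V;
  lcp : V -> nat;
  lcpo : V -> nat;
  cp : V -> seq V }.

Section Procedure.
Variables (V : finType) (e : rel V) (mate : V -> option V).

Definition free (v : V) : bool := mate v == None.

Definition inS (s : state V) (x : V) : bool := [exists C in nodes s, x \in C].

Definition anc (s : state V) (A C : {set V}) : bool :=
  connect [rel C D | parent s C == Some D] C A.

Definition init_state : state V :=
  {| delta := 1; growing := true;
     nodes := [set [set v] | v in [pred v | free v]];
     blossoms := [set [set v] | v in [pred v | free v]];
     parent := fun _ => None;
     base := fun C => [pick v in C];
     lcp := fun _ => 0; lcpo := fun _ => 0;
     cp := fun v => [:: v] |}.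

Definition grow (s : state V) (Bv : {set V}) (v x y : V) : state V :=
  {| delta := delta s; growing := true;
     nodes := nodes s :|: [set [set x]; [set y]];
     blossoms := blossoms s :|: [set [set y]];
     parent := fun C => if C == [set x] then Some Bv
                        else if C == [set y] then Some [set x] else parent s C;
     base := fun C => if C == [set y] then Some y else base s C;
     lcp := fun w => if w == y then delta s else lcp s w;
     lcpo := fun w => if w == x then (delta s).-1 else lcpo s w;
     cp := fun w => if w == x then rcons (cp s v) x
                    else if w == y then rcons (rcons (cp s v) x) y
                    else cp s w |}.

Definition growth_possible (s : state V) : Prop :=
  ~~ odd (delta s) /\
  exists Bv v x, [/\ Bv \in blossoms s, v \in Bv, lcp s v = delta s - 2,
                     e v x & ~~ inS s x].

Definition pathP (s : state V) (Bx By B : {set V}) : {set {set V}} :=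
  [set C in nodes s | anc s B C && (anc s C Bx || anc s C By)].

Definition oddOn (s : state V) (Bz B : {set V}) : {set V} :=
  [set z | [exists C in nodes s,
     [&& C \notin blossoms s, z \in C, anc s B C & anc s C Bz]]].

Definition merge (s : state V) (x y : V) (Bx By B : {set V}) : state V :=
  let P := pathP s Bx By B in
  let N := \bigcup_(C in P) C in
  let oX := oddOn s Bx B in
  let oY := oddOn s By B in
  {| delta := delta s; growing := false;
     nodes := (nodes s :\: P) :|: [set N];
     blossoms := (blossoms s :\: P) :|: [set N];
     parent := fun C => if C == N then parent s B else
                 match parent s C with
                 | Some D => if D \in P then Some N else Some D
                 | None => None end;
     base := fun C => if C == N then base s B else base s C;
     lcp := fun z => if (z \in oX) || (z \in oY)
                     then lcp s x + 1 + lcp s y - lcpo s z else lcp s z;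
     lcpo := lcpo s;
     cp := fun z =>
       if z \in oY then cp s x ++ rev (drop (index z (cp s y)) (cp s y))
       else if z \in oX then cp s y ++ rev (drop (index z (cp s x)) (cp s x))
       else cp s z |}.

Definition bridge_candidate (s : state V) (x y : V) : Prop :=
  e x y /\ mate x <> Some y /\
  exists Bx By, [/\ Bx \in blossoms s, By \in blossoms s, x \in Bx, y \in By &
                    Bx != By] /\ lcp s x + lcp s y = 2 * delta s - 2.

Inductive step : state V -> state V -> Prop :=
| step_grow s Bv v x y :
    growing s -> ~~ odd (delta s) -> Bv \in blossoms s -> v \in Bv ->
    lcp s v = delta s - 2 -> e v x -> ~~ inS s x -> mate x = Some y ->
    step s (grow s Bv v x y)
| step_end_growth s :
    growing s -> ~ growth_possible s ->
    step s {| delta := delta s; growing := false; nodes := nodes s;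
              blossoms := blossoms s; parent := parent s; base := base s;
              lcp := lcp s; lcpo := lcpo s; cp := cp s |}
| step_bridge s x y Bx By B :
    ~~ growing s -> e x y -> mate x <> Some y ->
    Bx \in blossoms s -> By \in blossoms s -> x \in Bx -> y \in By -> Bx != By ->
    lcp s x + lcp s y = 2 * delta s - 2 ->
    anc s B Bx -> anc s B By ->
    (forall A, anc s A Bx -> anc s A By -> anc s A B) ->
    step s (merge s x y Bx By B)
| step_end_bridge s :
    (* no candidate edge left at all (a candidate in different trees stops
       the procedure, i.e. no further step) *)
    ~~ growing s -> ~ (exists x y, bridge_candidate s x y) ->
    step s {| delta := (delta s).+1; growing := true; nodes := nodes s;
              blossoms := blossoms s; parent := parent s; base := base s;
              lcp := lcp s; lcpo := lcpo s; cp := cp s |}.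

Inductive reachable : state V -> Prop :=
| reach_init : reachable init_state
| reach_step s s' : reachable s -> step s s' -> reachable s'.

End Procedure.

(* Main.v *)
Require Import Defs.
From mathcomp Require Import all_boot zify.
Set Implicit Arguments. Unset Strict Implicit. Unset Printing Implicit Defensive.


Section Inv.
Variables (V : finType) (e : rel V) (mate : V -> option V).
Implicit Types (s : state V) (A C D E K O : {set V}).

Definition keyv (s : state V) (A : {set V}) : option V :=
  if A \in blossoms s then base s A else [pick a in A].
Definition lev (s : state V) (A : {set V}) (a : V) : nat :=
  if A \in blossoms s then lcp s a else lcpo s a.
Definition levn (s : state V) (A : {set V}) : nat :=
  if keyv s A is Some a then lev s A a else 0.

Record Inv (s : state V) : Prop := {
 i_delta : 0 < delta s;
 i_bn : {subset blossoms s <= nodes s};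
 i_disj : forall C D, C \in nodes s -> D \in nodes s -> C != D -> [disjoint C & D];
 i_key : forall A, A \in nodes s -> exists2 a, keyv s A = Some a & a \in A;
 i_odd : forall A, A \in nodes s -> A \notin blossoms s -> exists a, A = [set a];
 i_par : forall C D, C \in nodes s -> parent s C = Some D ->
           D \in nodes s /\ levn s D < levn s C;
 i_one : forall O C1 C2, C1 \in nodes s -> C2 \in nodes s -> O \notin blossoms s ->
           parent s C1 = Some O -> parent s C2 = Some O -> C1 = C2;
 i_cp : forall C w A, C \in nodes s -> w \in C -> anc s A C ->
          exists a, [/\ keyv s A = Some a, a \in cp s w & index a (cp s w) = lev s A a];
 i_size : forall C w, C \in nodes s -> w \in C ->
          size (cp s w) = (if C \in blossoms s then lcp s w else lcpo s w).+1;
 i_cpS : forall C w u, C \in nodes s -> w \in C -> u \in cp s w -> inS s u;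
 i_mate : forall u w, inS s u -> mate u = Some w -> inS s w }.

Lemma anc_refl s A : anc s A A.
Proof. exact: connect0. Qed.

Lemma anc_par s A C D : parent s C = Some D -> anc s A D -> anc s A C.
Proof.
move=> hp hA; rewrite /anc; apply: connect_trans hA.
by apply: connect1; rewrite /= hp.
Qed.

Lemma anc_step s A C : anc s A C -> A = C \/ exists2 D, parent s C = Some D & anc s A D.
Proof.
case/connectP=> [[|D p]] /=; first by left.
case/andP=> /eqP hp hpa ->; right; exists D => //.
by apply/connectP; exists p.
Qed.

Lemma anc_ind s (P : {set V} -> Prop) C :
  P C -> (forall D E, anc s D C -> P D -> parent s D = Some E -> P E) ->
  forall A, anc s A C -> P A.
Proof.
move=> P0 PS A /connectP [p hp ->].
suff H: forall X, anc s X C -> P X ->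
   path [rel C D | parent s C == Some D] X p -> P (last X p).
  exact: H (anc_refl _ _) P0 hp.
elim: p {hp} => [|D p IH] X hX PX //=.
case/andP=> /eqP hpar hp; apply: IH hp; last exact: PS hpar.
by apply: connect_trans hX (connect1 _); rewrite /= hpar.
Qed.

Lemma anc_last s A C : anc s A C -> A = C \/ exists K, parent s K = Some A /\ anc s K C.
Proof.
move=> h; pattern A; apply: (anc_ind (C:=C)) h; first by left.
by move=> D E hD _ hp; right; exists D.
Qed.

Lemma anc_trans s A C D : anc s A C -> anc s C D -> anc s A D.
Proof. by move=> h1 h2; apply: connect_trans h2 h1. Qed.

Lemma anc_lev s C A : Inv s -> C \in nodes s -> anc s A C ->
  A \in nodes s /\ (A = C \/ levn s A < levn s C).
Proof.
move=> I hC h; pattern A; apply: (anc_ind (C:=C)) h; first by split; [|left].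
move=> D E _ [hD hl] hp; have [hE lt] := i_par I hD hp; split => //; right.
by case: hl => [<-|]; [|move/(ltn_trans lt)].
Qed.

Lemma pick_set1 (a:V) : [pick x in [set a]] = Some a.
Proof. case: pickP => [b|/(_ a)]; rewrite in_set1 ?eqxx //; by move/eqP->. Qed.

Lemma same_node s C D w : Inv s -> C \in nodes s -> D \in nodes s ->
  w \in C -> w \in D -> C = D.
Proof.
move=> I hC hD hwC hwD; apply/eqP; apply/negPn/negP => ne.
by move: (disjointFr (i_disj I hC hD ne) hwC); rewrite hwD.
Qed.

Lemma inv_init : Inv (init_state mate).
Proof.
have nodeP C : C \in nodes (init_state mate) -> exists2 u, C = [set u] & free mate u.
  by case/imsetP=> u; rewrite inE => hu ->; exists u.
have ancE A C : anc (init_state mate) A C -> A = C.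
  by case/anc_step => // [[D]].
split => //=.
- move=> C D /nodeP [u -> _] /nodeP [w -> _] ne; rewrite disjoints1 in_set1.
  by apply: contraNN ne => /eqP ->.
- move=> A hA; have [u -> _] := nodeP A hA; exists u; last by rewrite in_set1.
  by rewrite /keyv /= pick_set1; case: ifP.
- by move=> A hA; rewrite hA.
- move=> C w A hC hw /ancE ->; have [u hu _] := nodeP C hC; move: hw; rewrite hu in_set1 => /eqP ->.
  exists u; rewrite /keyv /lev /= pick_set1 mem_seq1 eqxx; by case: ifP.
- by move=> C w hC hw; case: ifP.
- move=> C w u hC hw; rewrite mem_seq1 => /eqP ->; apply/existsP; exists C; by rewrite hC.
- move=> u w /existsP [C /andP [hC hu]]; have [v hv fv] := nodeP C hC.
  by move: hu fv; rewrite hv in_set1 /free => /eqP -> /eqP ->.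
Qed.

End Inv.


Lemma ar1 a l d : a <= l -> l = d - 2 -> 1 < d -> a < d.-1. Proof. lia. Qed.
Lemma ar2 d : 1 < d -> d.-1 < d. Proof. lia. Qed.
Lemma ar3 l d : l = d - 2 -> 1 < d -> l.+1 = d.-1. Proof. lia. Qed.
Lemma ar4 l d : l = d - 2 -> 1 < d -> l.+1 + 1 = d. Proof. lia. Qed.
Lemma ar5 l d : l = d - 2 -> 1 < d -> (l.+1).+1 = (d.-1).+1. Proof. lia. Qed.
Lemma ar6 l d : l = d - 2 -> 1 < d -> ((l.+1).+1).+1 = d.+1. Proof. lia. Qed.

Section Grow.
Variables (V : finType) (e : rel V) (mate : V -> option V).
Hypotheses (e_irr : irreflexive e) (HM : is_matching e mate).
Implicit Types (A C D E K O : {set V}).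
Variables (s : state V) (Bv : {set V}) (v x y : V).
Hypotheses (I : Inv mate s) (hdel : ~~ odd (delta s)) (hBv : Bv \in blossoms s)
  (hv : v \in Bv) (hlcp : lcp s v = delta s - 2) (hx : ~~ inS s x) (hm : mate x = Some y).

Let s' := grow s Bv v x y.

Lemma key_in A a : A \in nodes s -> keyv s A = Some a -> a \in A.
Proof. by move=> hA; case: (i_key I hA) => b -> hb [<-]. Qed.

Lemma notin_node z C : ~~ inS s z -> C \in nodes s -> z \notin C.
Proof. by move=> hz hC; apply: contraNN hz => hzC; apply/existsP; exists C; rewrite hC. Qed.

Lemma inv_grow : Inv mate s'.
Proof.
have [my exy] := HM hm.
have hy : ~~ inS s y by apply: contraNN hx => hy; apply: (i_mate I hy my).
have xy : x != y by apply: contraTneq exy => ->; rewrite e_irr.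
have hBn : Bv \in nodes s := i_bn I hBv.
have d2 : 2 <= delta s.
  by move: (i_delta I) hdel; case: (delta s) => [|[|d]].
have nx C : C \in nodes s -> C != [set x].
  by move=> hC; apply: contraNneq (notin_node hx hC) => ->; rewrite in_set1.
have ny C : C \in nodes s -> C != [set y].
  by move=> hC; apply: contraNneq (notin_node hy hC) => ->; rewrite in_set1.
have nxy : [set x] != [set y].
  apply/negP => /eqP/setP/(_ x); rewrite !in_set1 eqxx => /esym/eqP e1.
  by rewrite e1 eqxx in xy.
have nxB : [set x] \notin blossoms s by apply/negP => /(i_bn I) /nx; rewrite eqxx.
have nyB : [set y] \notin blossoms s by apply/negP => /(i_bn I) /ny; rewrite eqxx.
have nodesE C : C \in nodes s' -> [\/ C \in nodes s, C = [set x] | C = [set y]].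
  by rewrite !inE => /or3P [h|/eqP h|/eqP h]; [constructor 1|constructor 2|constructor 3].
have nodes_old C : C \in nodes s -> C \in nodes s' by move=> hC; rewrite !inE hC.
have nodes_x : [set x] \in nodes s' by rewrite !inE eqxx !orbT.
have nodes_y : [set y] \in nodes s' by rewrite !inE eqxx !orbT.
have blE C : C != [set y] -> (C \in blossoms s') = (C \in blossoms s).
  by move=> hC; rewrite /= !inE (negbTE hC) orbF.
have keyE C : C != [set y] -> keyv s' C = keyv s C.
  by move=> hC; rewrite /keyv blE //= (negbTE hC).
have levE C a : C != [set y] -> a != x -> a != y -> lev s' C a = lev s C a.
  by move=> hC hax hay; rewrite /lev blE //= (negbTE hax) (negbTE hay).
have levnE C : C \in nodes s -> levn s' C = levn s C.
  move=> hC; rewrite /levn keyE ?ny //; case hk: (keyv s C) => [a|] //.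
  have ha := key_in hC hk.
  by rewrite levE ?ny //; [apply: contraNneq (notin_node hx hC) => <- | apply: contraNneq (notin_node hy hC) => <-].
have keyx : keyv s' [set x] = Some x by rewrite (keyE _ nxy) /keyv (negbTE nxB) pick_set1.
have keyy : keyv s' [set y] = Some y by rewrite /keyv /= !inE ?eqxx ?orbT.
have levx : lev s' [set x] x = (delta s).-1.
  by rewrite /lev blE // (negbTE nxB) /= eqxx.
have levy : lev s' [set y] y = delta s.
  by rewrite /lev /= !inE ?eqxx ?orbT.
have parE C : C \in nodes s -> parent s' C = parent s C.
  by move=> hC; rewrite /= (negbTE (nx _ hC)) (negbTE (ny _ hC)).
have parx : parent s' [set x] = Some Bv by rewrite /= eqxx.
have pary : parent s' [set y] = Some [set x] by rewrite /= eq_sym (negbTE nxy) eqxx.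
have ancO A C : C \in nodes s -> anc s' A C -> A \in nodes s /\ anc s A C.
  move=> hC h; pattern A; apply: (anc_ind (C:=C)) h; first by split=> //; apply: anc_refl.
  move=> D E' _ [hD hDC]; rewrite parE // => hp; have [hE _] := i_par I hD hp.
  by split => //; apply: anc_trans hDC; apply: anc_par hp (anc_refl _ _).
have inS' z : inS s z -> inS s' z.
  by case/existsP=> C /andP [hC hz]; apply/existsP; exists C; rewrite nodes_old.
have inSx : inS s' x by apply/existsP; exists [set x]; rewrite nodes_x in_set1 eqxx.
have inSy : inS s' y by apply/existsP; exists [set y]; rewrite nodes_y in_set1 eqxx.
have wx C w : C \in nodes s -> w \in C -> w != x.
  by move=> hC hw; apply: contraNneq (notin_node hx hC) => <-.
have wy C w : C \in nodes s -> w \in C -> w != y.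
  by move=> hC hw; apply: contraNneq (notin_node hy hC) => <-.
have cpE C w : C \in nodes s -> w \in C -> cp s' w = cp s w.
  by move=> hC hw; rewrite /= (negbTE (wx _ _ hC hw)) (negbTE (wy _ _ hC hw)).
have cpx : cp s' x = rcons (cp s v) x by rewrite /= eqxx.
have cpy : cp s' y = rcons (rcons (cp s v) x) y by rewrite /= eq_sym (negbTE xy) eqxx.
have xcp : x \notin cp s v by apply: contraNN hx; apply: (i_cpS I hBn hv).
have ycp : y \notin cp s v by apply: contraNN hy; apply: (i_cpS I hBn hv).
have szv : size (cp s v) = (lcp s v).+1 by rewrite (i_size I hBn hv) hBv.
have [b [hkb hb hib]] := i_cp I hBn hv (anc_refl _ Bv).
have lbv : lev s Bv b <= lcp s v.
  by rewrite -hib -ltnS -szv index_mem.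
have levnB : levn s Bv = lev s Bv b by rewrite /levn hkb.
have ka A a : A \in nodes s -> keyv s A = Some a -> (a != x) && (a != y).
  by move=> hA hk; have ha := key_in hA hk; rewrite (wx _ _ hA ha) (wy _ _ hA ha).
have oldBv A t : anc s' A Bv -> exists a, [/\ keyv s' A = Some a, a \in cp s v ++ t &
     index a (cp s v ++ t) = lev s' A a].
  move=> h; have [hA hAB] := ancO _ _ hBn h; have [a [hk ha hi]] := i_cp I hBn hv hAB.
  have /andP [ax ay] := ka _ _ hA hk.
  by exists a; rewrite keyE ?ny // levE ?ny // mem_cat ha index_cat ha.
have lvx : levn s' [set x] = (delta s).-1 by rewrite /levn keyx levx.
have lvy : levn s' [set y] = delta s by rewrite /levn keyy levy.
have parO C O : C \in nodes s' -> O \notin blossoms s' -> parent s' C = Some O ->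
   (C \in nodes s /\ parent s C = Some O /\ O \in nodes s) \/ (C = [set y] /\ O = [set x]).
  move=> /nodesE [hC|->|->] hO.
  - by rewrite parE // => hp; left; have [hD _] := i_par I hC hp.
  - by rewrite parx => -[hB]; move: hO; rewrite -hB !inE hBv.
  - by rewrite pary => -[<-]; right.
split.
- exact: i_delta I.
- move=> C; rewrite !inE => /orP [/(i_bn I) hC| /eqP ->]; by rewrite ?hC ?eqxx ?orbT.
- move=> C D /nodesE [hC|->|->] /nodesE [hD|->|->] ne.
  + exact: (i_disj I hC hD ne).
  + by rewrite disjoint_sym disjoints1 (notin_node hx hC).
  + by rewrite disjoint_sym disjoints1 (notin_node hy hC).
  + by rewrite disjoints1 (notin_node hx hD).
  + by rewrite eqxx in ne.
  + by rewrite disjoints1 in_set1.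
  + by rewrite disjoints1 (notin_node hy hD).
  + by rewrite disjoints1 in_set1 eq_sym.
  + by rewrite eqxx in ne.
- move=> A /nodesE [hA|->|->].
  + by rewrite keyE ?ny //; apply: (i_key I hA).
  + by exists x; rewrite ?keyx ?in_set1.
  + by exists y; rewrite ?keyy ?in_set1.
- move=> A /nodesE [hA|->|->] hB.
  + by apply: (i_odd I hA); rewrite -blE ?ny.
  + by exists x.
  + by move: hB; rewrite !inE eqxx orbT.
- move=> C D /nodesE [hC|->|->].
  + rewrite parE // => hp; have [hD lt] := i_par I hC hp.
    by split; [apply: nodes_old|rewrite !levnE].
  + rewrite parx => -[<-]; split; first exact: nodes_old.
    by rewrite lvx levnE // levnB; apply: ar1 lbv hlcp d2.
  + rewrite pary => -[<-]; split => //; by rewrite lvx lvy; apply: ar2.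
- move=> O C1 C2 h1 h2 hO p1 p2.
  case: (parO _ _ h1 hO p1) => [[n1 [q1 nO]]|[e1 e2]];
  case: (parO _ _ h2 hO p2) => [[n2 [q2 nO2]]|[e3 e4]].
  + by apply: (i_one I n1 n2) q1 q2; rewrite -blE ?ny.
  + by move: (nx _ nO); rewrite e4 eqxx.
  + by move: (nx _ nO2); rewrite e2 eqxx.
  + by rewrite e1 e3.
- move=> C w A /nodesE [hC|->|->] hw hanc.
  + have [hA hAC] := ancO A C hC hanc; have [a [hk ha hi]] := i_cp I hC hw hAC.
    have /andP [ax ay] := ka _ _ hA hk.
    by exists a; rewrite (cpE _ _ hC hw) keyE ?ny // levE ?ny.
  + move: hw; rewrite in_set1 => /eqP ->; rewrite cpx -cats1.
    case/anc_step: hanc => [->|[D]]; last by rewrite parx => -[<-]; apply: oldBv.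
    exists x; rewrite keyx levx mem_cat mem_seq1 eqxx orbT index_cat (negbTE xcp) /= eqxx.
    by split => //; rewrite addn0 szv; apply: ar3.
  + move: hw; rewrite in_set1 => /eqP ->; rewrite cpy -!cats1 -catA /=.
    case/anc_step: hanc => [->|[D]].
      exists y; rewrite keyy levy mem_cat !inE eqxx !orbT index_cat (negbTE ycp) /=.
      have yx : y != x by rewrite eq_sym.
      by rewrite ?(negbTE xy) ?(negbTE yx) ?eqxx; split => //; rewrite szv; apply: ar4.
    rewrite pary => -[<-] hanc.
    case/anc_step: hanc => [->|[D']]; last by rewrite parx => -[<-]; apply: oldBv.
    exists x; rewrite keyx levx mem_cat !inE eqxx !orbT index_cat (negbTE xcp) /= eqxx.
    by split => //; rewrite addn0 szv; apply: ar3.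
- move=> C w /nodesE [hC|->|->] hw.
  + rewrite (cpE _ _ hC hw) blE ?ny // (i_size I hC hw) /=.
    by rewrite (negbTE (wx _ _ hC hw)) (negbTE (wy _ _ hC hw)).
  + move: hw; rewrite in_set1 => /eqP ->; rewrite cpx size_rcons szv blE // (negbTE nxB) /= eqxx.
    exact: ar5.
  + move: hw; rewrite in_set1 => /eqP ->; rewrite cpy !size_rcons szv /= !inE eqxx orbT /= eqxx.
    exact: ar6.
- move=> C w u /nodesE [hC|->|->] hw hu.
  + by apply: inS'; apply: (i_cpS I hC hw); rewrite -(cpE _ _ hC hw).
  + move: hw hu; rewrite in_set1 => /eqP ->; rewrite cpx mem_rcons in_cons.
    by case/orP => [/eqP ->|hu] //; apply: inS'; apply: (i_cpS I hBn hv).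
  + move: hw hu; rewrite in_set1 => /eqP ->; rewrite cpy !mem_rcons !in_cons.
    rewrite mem_rcons in_cons; by case/orP => [/eqP ->|/orP [/eqP ->|hu]] //; apply: inS'; apply: (i_cpS I hBn hv).
- move=> u w /existsP [C /andP [/nodesE [hC|->|->] huC]] hmu.
  + by apply: inS'; apply: (i_mate I _ hmu); apply/existsP; exists C; rewrite hC.
  + by move: huC hmu; rewrite in_set1 => /eqP ->; rewrite hm => -[<-].
  + by move: huC hmu; rewrite in_set1 => /eqP ->; rewrite my => -[<-].
Qed.
End Grow.


Lemma ar7 i lx ly : i < ly.+1 -> lx.+1 + (ly.+1 - i) = (lx + 1 + ly - i).+1.
Proof. lia. Qed.
Lemma ar8 i lx ly : i < lx.+1 -> ly.+1 + (lx.+1 - i) = (lx + 1 + ly - i).+1.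
Proof. lia. Qed.

Section Merge.
Variables (V : finType) (mate : V -> option V).
Implicit Types (A C D E K O : {set V}).
Variables (s : state V) (x y : V) (Bx By B : {set V}).
Hypotheses (I : Inv mate s) (hBx : Bx \in blossoms s) (hBy : By \in blossoms s)
  (hx : x \in Bx) (hy : y \in By) (hax : anc s B Bx) (hay : anc s B By)
  (hlca : forall A, anc s A Bx -> anc s A By -> anc s A B).

Let P := Defs.pathP s Bx By B.
Let N := \bigcup_(C in P) C.
Let oX := oddOn s Bx B.
Let oY := oddOn s By B.
Let s' := Defs.merge s x y Bx By B.

Lemma keyin A a : A \in nodes s -> keyv s A = Some a -> a \in A.
Proof. by move=> hA; case: (i_key I hA) => b -> hb [<-]. Qed.

Lemma inv_merge : Inv mate s'.
Proof.
have hBxn := i_bn I hBx; have hByn := i_bn I hBy.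
have [hBn _] := anc_lev I hBxn hax.
have inP C : (C \in P) = [&& C \in nodes s, anc s B C & anc s C Bx || anc s C By].
  by rewrite /P /Defs.pathP inE.
have BP : B \in P by rewrite inP hBn anc_refl hax.
have Pn C : C \in P -> C \in nodes s by rewrite inP => /and3P [].
have PB C : C \in P -> anc s B C by rewrite inP => /and3P [].
have hBb : B \in blossoms s.
  apply/negPn/negP => hBo.
  have nB C : C \in blossoms s -> B != C by move=> hC; apply: contraNneq hBo => ->.
  case: (anc_last hax) => [/eqP|[K [pK aK]]]; first by rewrite (negbTE (nB _ hBx)).
  case: (anc_last hay) => [/eqP|[K' [pK' aK']]]; first by rewrite (negbTE (nB _ hBy)).
  have [hK _] := anc_lev I hBxn aK; have [hK' _] := anc_lev I hByn aK'.
  have eK := i_one I hK hK' hBo pK pK'; subst K'.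
  have := hlca aK aK'; have [_ lt] := i_par I hK pK.
  case/(anc_lev I hBn) => _ [eKB|lt2]; first by move: lt; rewrite eKB ltnn.
  by move: (ltn_trans lt lt2); rewrite ltnn.
have [b hkb hbB] := i_key I hBn.
have NP w : (w \in N) = [exists C in P, w \in C].
  apply/bigcupP/existsP => [[C hC hw]|[C /andP [hC hw]]]; by exists C; rewrite ?hC.
have subN C w : C \in P -> w \in C -> w \in N.
  by move=> hC hw; rewrite NP; apply/existsP; exists C; rewrite hC.
have bN : b \in N := subN _ _ BP hbB.
have notinN D w : D \in nodes s -> D \notin P -> w \in D -> w \notin N.
  move=> hD hDP hw; rewrite NP; apply/negP => /existsP [C /andP [hC hwC]].
  by move: hDP; rewrite -(same_node I (Pn _ hC) hD hwC hw) hC.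
have notN D : D \in nodes s -> D \notin P -> D != N.
  move=> hD hDP; apply/negP => /eqP eD.
  by have := notinN _ b hD hDP; rewrite eD bN => /(_ isT).
have oddE z Bz : z \in oddOn s Bz B ->
    exists C, [/\ C \in nodes s, C \notin blossoms s, z \in C, anc s B C & anc s C Bz].
  by rewrite inE => /existsP [C /and5P [h1 h2 h3 h4 h5]]; exists C.
have oXN z : z \in oX -> z \in N.
  case/oddE=> C [h1 _ h3 h4 h5]; apply: (subN C) h3; by rewrite inP h1 h4 h5.
have oYN z : z \in oY -> z \in N.
  case/oddE=> C [h1 _ h3 h4 h5]; apply: (subN C) h3; by rewrite inP h1 h4 h5 orbT.
have blO A a Bz : A \in blossoms s -> a \in A -> a \notin oddOn s Bz B.
  move=> hA ha; apply/negP => /oddE [C [h1 h2 h3 _ _]].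
  by move: h2; rewrite (same_node I h1 (i_bn I hA) h3 ha) hA.
have outX D w : D \in nodes s -> D \notin P -> w \in D -> w \notin oX.
  by move=> hD hDP hw; apply: contraNN (notinN _ _ hD hDP hw); apply: oXN.
have outY D w : D \in nodes s -> D \notin P -> w \in D -> w \notin oY.
  by move=> hD hDP hw; apply: contraNN (notinN _ _ hD hDP hw); apply: oYN.
have parB D : parent s B = Some D -> D \in nodes s /\ D \notin P.
  move=> hp; have [hD lt] := i_par I hBn hp; split => //.
  apply/negP => /PB /(anc_lev I hD) [_ [eDB|lt2]].
    by move: lt; rewrite eDB ltnn.
  by move: (ltn_trans lt lt2); rewrite ltnn.
have nodesE C : (C \in nodes s') = ((C \in nodes s) && (C \notin P)) || (C == N).
  by rewrite /= !inE andbC.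
have blE C : (C \in blossoms s') = ((C \in blossoms s) && (C \notin P)) || (C == N).
  by rewrite /= !inE andbC.
have NN : N \in nodes s' by rewrite nodesE eqxx orbT.
have NB : N \in blossoms s' by rewrite blE eqxx orbT.
have oldN C : C \in nodes s -> C \notin P -> C \in nodes s'.
  by move=> h1 h2; rewrite nodesE h1 h2.
have nodes'E C : C \in nodes s' -> C = N \/ (C != N /\ C \in nodes s /\ C \notin P).
  rewrite nodesE => /orP [/andP [h1 h2]|/eqP ->]; last by left.
  by right; split => //; apply: notN.
have blOld C : C \notin P -> C != N -> (C \in blossoms s') = (C \in blossoms s).
  by move=> h1 h2; rewrite blE (negbTE h2) h1 orbF andbT.
have keyOld C : C \notin P -> C != N -> keyv s' C = keyv s C.
  by move=> h1 h2; rewrite /keyv blOld //= (negbTE h2).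
have keyN : keyv s' N = Some b.
  by rewrite /keyv NB /= eqxx -hkb /keyv hBb.
have lcpE z : lcp s' z = if (z \in oX) || (z \in oY) then lcp s x + 1 + lcp s y - lcpo s z
                          else lcp s z by [].
have cpE z : cp s' z = if z \in oY then cp s x ++ rev (drop (index z (cp s y)) (cp s y))
       else if z \in oX then cp s y ++ rev (drop (index z (cp s x)) (cp s x))
       else cp s z by [].
have parE C : parent s' C = if C == N then parent s B else
                 match parent s C with
                 | Some D => if D \in P then Some N else Some D
                 | None => None end by [].
have levOld C a : C \in nodes s -> C \notin P -> C != N -> a \in C -> lev s' C a = lev s C a.
  move=> h1 h2 h3 ha; rewrite /lev blOld // lcpE /=.
  by rewrite (negbTE (outX _ _ h1 h2 ha)) (negbTE (outY _ _ h1 h2 ha)).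
have levNb : lev s' N b = lev s B b.
  by rewrite /lev NB hBb lcpE (negbTE (blO _ _ _ hBb hbB)) (negbTE (blO _ _ _ hBb hbB)).
have levnOld C : C \in nodes s -> C \notin P -> C != N -> levn s' C = levn s C.
  move=> h1 h2 h3; rewrite /levn keyOld //; case hk: (keyv s C) => [a|] //.
  by rewrite levOld // (keyin h1 hk).
have levnN : levn s' N = levn s B by rewrite /levn keyN hkb levNb.
pose Q C0 X := X \in nodes s' /\ ((X = N /\ anc s B C0) \/
     (X != N /\ X \notin P /\ X \in nodes s /\ anc s X C0)).
have stepQ C0 D E : Q C0 D -> parent s' D = Some E -> Q C0 E.
  case=> _ [[-> hB0]|[hDN [hDP [hD hD0]]]].
  - rewrite parE eqxx => hp; have [hE hEP] := parB _ hp.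
    split; first exact: oldN.
    right; split; first exact: notN.
    by split => //; split => //; apply: anc_trans (anc_par hp (anc_refl _ _)) hB0.
  - rewrite parE (negbTE hDN); case hp: (parent s D) => [D2|] //.
    have [hD2 _] := i_par I hD hp.
    have aD2 : anc s D2 C0 := anc_trans (anc_par hp (anc_refl _ _)) hD0.
    case: ifP => hD2P [<-].
    + by split => //; left; split => //; apply: anc_trans (PB _ hD2P) aD2.
    + split; first by apply: oldN; rewrite ?hD2P.
      by right; split; [apply: notN; rewrite ?hD2P|rewrite hD2P].
have ancQ C0 C A : Q C0 C -> anc s' A C -> Q C0 A.
  move=> hQ h; pattern A; apply: (anc_ind (C:=C)) h => //.
  by move=> D E' _ hD hp; apply: stepQ hD hp.
have cpH C0 Cw w' t A : Cw \in nodes s -> w' \in Cw -> anc s C0 Cw -> Q C0 A ->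
    exists a, [/\ keyv s' A = Some a, a \in cp s w' ++ t & index a (cp s w' ++ t) = lev s' A a].
  move=> hCw hw' hC0 [_ [[-> h]|[hAN [hAP [hA h]]]]].
  - have [a [hk ha hi]] := i_cp I hCw hw' (anc_trans h hC0).
    rewrite hkb in hk; case: hk => ea; subst a.
    by exists b; rewrite keyN mem_cat ha index_cat ha hi levNb.
  - have [a [hk ha hi]] := i_cp I hCw hw' (anc_trans h hC0).
    exists a; rewrite keyOld // mem_cat ha index_cat ha hi levOld //.
    exact: keyin hA hk.
have oddKey D z Bz w' : D \in nodes s -> D \notin blossoms s -> z \in D -> anc s D Bz ->
    Bz \in nodes s -> w' \in Bz -> z \in cp s w' /\ index z (cp s w') = lcpo s z.
  move=> h1 h2 h3 h4 hBz hw'.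
  have [a [hk ha hi]] := i_cp I hBz hw' h4.
  have haD := keyin h1 hk; have [c eD] := i_odd I h1 h2.
  move: haD h3; rewrite eD !in_set1 => /eqP ea /eqP ez; subst a z.
  by move: hi; rewrite /lev (negbTE h2).
have inSE u : inS s' u = inS s u.
  apply/existsP/existsP => [[C /andP [hC hu]]|[C /andP [hC hu]]].
  - case: (nodes'E C hC) => [eC|[_ [hCo _]]].
    + move: hu; rewrite eC NP => /existsP [C1 /andP [h1 h2]].
      by exists C1; rewrite h2 (Pn _ h1).
    + by exists C; rewrite hCo.
  - case hCP: (C \in P).
    + by exists N; rewrite NN (subN C).
    + by exists C; rewrite oldN ?hCP.
have wN w : w \in N -> exists2 C1, C1 \in P & w \in C1.
  by rewrite NP => /existsP [C1 /andP [h1 h2]]; exists C1.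
have disjN D : D \in nodes s -> D \notin P -> [disjoint N & D].
  move=> hD hDP; rewrite disjoint_subset; apply/subsetP => w hw; rewrite !inE.
  by apply/negP => hwD; move: (notinN _ _ hD hDP hwD); rewrite hw.
split.
- exact: i_delta I.
- move=> C; rewrite blE => /orP [/andP [h1 h2]|/eqP ->] //.
  by apply: oldN => //; exact: (i_bn I h1).
- move=> C D hC hD ne.
  case: (nodes'E C hC) => [eC|[hCN [hCo hCP]]];
  case: (nodes'E D hD) => [eD|[hDN [hDo hDP]]].
  + by rewrite eC eD eqxx in ne.
  + by rewrite eC; apply: disjN.
  + by rewrite eD disjoint_sym; apply: disjN.
  + exact: (i_disj I hCo hDo ne).
- move=> A hA; case: (nodes'E A hA) => [->|[hAN [hAo hAP]]].
  + by exists b.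
  + by rewrite keyOld //; apply: (i_key I hAo).
- move=> A hA; case: (nodes'E A hA) => [->|[hAN [hAo hAP]]].
  + by rewrite NB.
  + by rewrite blOld //; apply: (i_odd I hAo).
- move=> C D hC; case: (nodes'E C hC) => [->|[hCN [hCo hCP]]].
  + rewrite parE eqxx => hp; have [hD hDP] := parB _ hp; have [_ lt] := i_par I hBn hp.
    by split; [apply: oldN|rewrite levnN levnOld // notN].
  + rewrite parE (negbTE hCN); case hq: (parent s C) => [D2|] //.
    have [hD2 lt] := i_par I hCo hq.
    rewrite (levnOld _ hCo hCP hCN).
    case: ifP => hD2P [<-].
    * split => //; rewrite levnN.
      case: (anc_lev I hD2 (PB _ hD2P)) => _ [eB|lt2]; first by rewrite eB.
      exact: ltn_trans lt2 lt.
    * have hD2P' : D2 \notin P by rewrite hD2P.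
      by split; [apply: oldN|rewrite levnOld // notN].
- move=> O C1 C2 h1 h2 hO p1 p2.
  have hON : O != N by apply: contraNneq hO => ->.
  have par1 C : C \in nodes s' -> parent s' C = Some O -> exists C0,
      [/\ C0 \in nodes s, parent s C0 = Some O, O \notin P & (C = N /\ C0 = B \/ C != N /\ C0 = C)].
    move=> hC; case: (nodes'E C hC) => [->|[hCN [hCo hCP]]].
    + rewrite parE eqxx => hp; have [hD hDP] := parB _ hp.
      by exists B; split => //; left.
    + rewrite parE (negbTE hCN); case hq: (parent s C) => [D2|] //.
      case: ifP => hD2P [eO]; first by rewrite eO eqxx in hON.
      by exists C; subst D2; split => //; [rewrite hD2P|right].
  have [C10 [n1 q1 hOP e1]] := par1 _ h1 p1.
  have [C20 [n2 q2 _ e2]] := par1 _ h2 p2.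
  have hOb : O \notin blossoms s by rewrite -blOld.
  have e := i_one I n1 n2 hOb q1 q2; subst C20.
  case: e1 => [[eC1 eB1]|[hN1 eC1]]; case: e2 => [[eC2 eB2]|[hN2 eC2]].
  + by rewrite eC1 eC2.
  + case: (nodes'E C2 h2) => [eN|[_ [_ hCP]]]; first by rewrite eN eqxx in hN2.
    by rewrite -eC2 eB1 BP in hCP.
  + case: (nodes'E C1 h1) => [eN|[_ [_ hCP]]]; first by rewrite eN eqxx in hN1.
    by rewrite -eC1 eB2 BP in hCP.
  + by rewrite -eC1 -eC2.
- move=> C w A hC hw hanc; case: (nodes'E C hC) => [eC|[hCN [hCo hCP]]].
  + subst C.
    have QN : Q B N by split => //; left; split => //; apply: anc_refl.
    have hQ := ancQ _ _ _ QN hanc.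
    have [C1 hC1 hw1] := wN _ hw.
    rewrite cpE; case: ifP => wY; first exact: cpH hBxn hx hax hQ.
    case: ifP => wX; first exact: cpH hByn hy hay hQ.
    by rewrite -[cp s w]cats0; apply: cpH (Pn _ hC1) hw1 (PB _ hC1) hQ.
  + have QC : Q C C by split => //; right; do 3!split => //; apply: anc_refl.
    have hQ := ancQ _ _ _ QC hanc.
    rewrite cpE (negbTE (outY _ _ hCo hCP hw)) (negbTE (outX _ _ hCo hCP hw)).
    by rewrite -[cp s w]cats0; apply: cpH hCo hw (anc_refl _ _) hQ.
- move=> C w hC hw; case: (nodes'E C hC) => [eC|[hCN [hCo hCP]]].
  + subst C; rewrite NB cpE lcpE.
    have [C1 hC1 hw1] := wN _ hw.
    have szy : size (cp s y) = (lcp s y).+1 by rewrite (i_size I hByn hy) hBy.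
    have szx : size (cp s x) = (lcp s x).+1 by rewrite (i_size I hBxn hx) hBx.
    case: ifP => wY.
      have [D [h1 h2 h3 h4 h5]] := oddE _ _ wY.
      have [hwc hwi] := oddKey _ _ _ _ h1 h2 h3 h5 hByn hy.
      rewrite orbT size_cat size_rev size_drop (i_size I hByn hy) (i_size I hBxn hx) hBx hBy hwi.
      by apply: ar7; rewrite -hwi -szy index_mem.
    case: ifP => wX.
      have [D [h1 h2 h3 h4 h5]] := oddE _ _ wX.
      have [hwc hwi] := oddKey _ _ _ _ h1 h2 h3 h5 hBxn hx.
      rewrite size_cat size_rev size_drop (i_size I hByn hy) (i_size I hBxn hx) hBx hBy hwi.
      by apply: ar8; rewrite -hwi -szx index_mem.
    case hC1b: (C1 \in blossoms s); first by rewrite (i_size I (Pn _ hC1) hw1) hC1b.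
    move: hC1; rewrite inP => /and3P [h1 h2 /orP [h3|h3]].
    * by move: wX; rewrite inE => /existsP []; exists C1; rewrite h1 hC1b hw1 h2 h3.
    * by move: wY; rewrite inE => /existsP []; exists C1; rewrite h1 hC1b hw1 h2 h3.
  + rewrite blOld // cpE lcpE (negbTE (outY _ _ hCo hCP hw)) (negbTE (outX _ _ hCo hCP hw)).
    exact: (i_size I hCo hw).
- move=> C w u hC hw hu; rewrite inSE.
  case: (nodes'E C hC) => [eC|[hCN [hCo hCP]]].
  + subst C; have [C1 hC1 hw1] := wN _ hw.
    move: hu; rewrite cpE; case: ifP => wY.
      by rewrite mem_cat mem_rev => /orP [h|/mem_drop h]; [apply: (i_cpS I hBxn hx)|apply: (i_cpS I hByn hy)].
    case: ifP => wX.
      by rewrite mem_cat mem_rev => /orP [h|/mem_drop h]; [apply: (i_cpS I hByn hy)|apply: (i_cpS I hBxn hx)].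
    exact: (i_cpS I (Pn _ hC1) hw1).
  + move: hu; rewrite cpE (negbTE (outY _ _ hCo hCP hw)) (negbTE (outX _ _ hCo hCP hw)).
    exact: (i_cpS I hCo hw).
- by move=> u w; rewrite !inSE; apply: (i_mate I).
Qed.
End Merge.

Lemma inv_copy (V : finType) (mate : V -> option V) (s : state V) d g :
  Inv mate s -> 0 < d ->
  Inv mate {| delta := d; growing := g; nodes := nodes s;
              blossoms := blossoms s; parent := parent s; base := base s;
              lcp := lcp s; lcpo := lcpo s; cp := cp s |}.
Proof. by move=> I hd; case: I => *; split. Qed.

Lemma ar9 a l : a < l.+1 -> a + (l.+1 - a).-1 = l.
Proof. lia. Qed.

Theorem lemma1 (V : finType) (e : rel V) (mate : V -> option V)
  (e_sym : symmetric e) (e_irr : irreflexive e)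
  (HM : is_matching e mate)
  (s : state V) (Hs : reachable e mate s)
  (B : {set V}) (HB : B \in blossoms s) (v : V) (Hv : v \in B) :
  exists b, [/\ base s B = Some b, b \in cp s v &
    lcp s b + (size (drop (index b (cp s v)) (cp s v))).-1 = lcp s v].
Proof.
have I : Inv mate s.
  elim: Hs => [|s1 s2 _ I1 st]; first exact: inv_init.
  case: st I1 => {s1 s2}.
  - move=> s1 Bv v1 x y _ hdel hBv hv hlcp _ hx hm I1.
    exact: (inv_grow e_irr HM I1 hdel hBv hv hlcp hx hm).
  - by move=> s1 _ _ I1; apply: inv_copy => //; apply: (i_delta I1).
  - move=> s1 x y Bx By B0 _ _ _ hBx hBy hx hy _ _ hax hay hlca I1.
    exact: (inv_merge I1 hBx hBy hx hy hax hay hlca).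
  - by move=> s1 _ _ I1; apply: inv_copy.
have hBn := i_bn I HB.
have [a [hk ha hi]] := i_cp I hBn Hv (anc_refl s B).
exists a; move: hk hi; rewrite /keyv /lev HB => hk hi; split => //.
have sz : size (cp s v) = (lcp s v).+1 by rewrite (i_size I hBn Hv) HB.
rewrite size_drop sz hi; apply: ar9; rewrite -hi -sz index_mem //.
Qed.
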